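(* Let $p\in(1,\infty)$, let $\mathbf{A}=[\boldsymbol{a}_1,\dots,\boldsymbol{a}_m]^T\in\mathbb{R}^{m\times n}$ with entries $a_{ij}$, and let $\mathbf{y}\in\mathbb{R}^m$, and assume every column of $\mathbf{A}$ has at least one nonzero entry. Define $f_{LR}(\boldsymbol{x})=\sum_{i=1}^m |y_i-\boldsymbol{a}_i^T\boldsymbol{x}|^p$ for $\boldsymbol{x}\in\mathbb{R}^n$. Starting from an arbitrary $\boldsymbol{x}^0\in\mathbb{R}^n$, generate a sequence $\{\boldsymbol{x}^k\}$ (the PROMPT iteration) as follows: given $\boldsymbol{x}^k$, for each $j=1,\dots,n$ set $$x_j^{k+1}\in\underset{x_j\in\mathbb{R}}{\arg\min}\sum_{\substack{i=1\\ a_{ij}\neq 0}}^{m} |a_{ij}|^{p}\,\bigl|x_j-s_{ij}^k\bigr|^{p},\qquad s_{ij}^k = x_j^k+\frac{y_i-\boldsymbol{a}_i^T\boldsymbol{x}^k}{(n+1)\,a_{ij}}.$$ Then the sequence $\{f_{LR}(\boldsymbol{x}^k)\}$ is monotonically non-increasing (and hence converges to a finite value), and every limit point of $\{\boldsymbol{x}^k\}$ is a stationary point of $f_{LR}$.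
   Context: This update is the minimization of the majorizer of $f_{LR}$ obtained by writing $y_i-\boldsymbol{a}_i^T\boldsymbol{x}=\boldsymbol{c}_i^T\tilde{\boldsymbol{x}}$ with $\boldsymbol{c}_i=[-\boldsymbol{a}_i^T,\ y_i]^T$, $\tilde{\boldsymbol{x}}=[\boldsymbol{x}^T,1]^T$, and applying Jensen's inequality $|\boldsymbol{c}^T\tilde{\boldsymbol{x}}|^p\le \sum_{j=1}^{n+1}\frac{1}{n+1}|(n+1)c_j(\tilde x_j-\tilde x_j^k)+\boldsymbol{c}^T\tilde{\boldsymbol{x}}^k|^p$; the resulting surrogate is separable in the coordinates $x_j$. *)

(* Defs.v *)
From HB Require Import structures.
From mathcomp Require Import all_boot all_order all_algebra.
From mathcomp Require Import all_classical all_reals all_analysis.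
Set Implicit Arguments. Unset Strict Implicit. Unset Printing Implicit Defensive.
Import Order.TTheory GRing.Theory Num.Theory.
Import numFieldNormedType.Exports.
Local Open Scope ring_scope.

Definition rowdot (R : realType) (m n : nat) (A : 'M[R]_(m, n))
  (i : 'I_m) (x : 'rV[R]_n) : R := \sum_(j < n) A i j * x ord0 j.

Definition fLR (R : realType) (m n : nat) (p : R) (A : 'M[R]_(m, n))
  (y : 'I_m -> R) (x : 'rV[R]_n) : R :=
  \sum_(i < m) `|y i - rowdot A i x| `^ p.

Definition sPROMPT (R : realType) (m n : nat) (A : 'M[R]_(m, n))
  (y : 'I_m -> R) (xk : 'rV[R]_n) (i : 'I_m) (j : 'I_n) : R :=
  xk ord0 j + (y i - rowdot A i xk) / ((n + 1)%:R * A i j).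

(* the separable surrogate in coordinate j, evaluated at t *)
Definition gPROMPT (R : realType) (m n : nat) (p : R) (A : 'M[R]_(m, n))
  (y : 'I_m -> R) (xk : 'rV[R]_n) (j : 'I_n) (t : R) : R :=
  \sum_(i < m | A i j != 0) `|A i j| `^ p * `|t - sPROMPT A y xk i j| `^ p.

(* Main.v *)
Require Import Defs.
From HB Require Import structures.
From mathcomp Require Import all_boot all_order all_algebra.
From mathcomp Require Import all_classical all_reals all_analysis.
From mathcomp Require Import ring lra.
Import Order.TTheory GRing.Theory Num.Theory.
Import numFieldNormedType.Exports.
Local Open Scope classical_set_scope.
Local Open Scope ring_scope.


Section H.
Context {R : realType}.
Variable p : R.
Hypothesis p1 : 1 < p.

Definition hh (t : R) := `|t| `^ p.

Lemma hconv (l a b : R) : 0 <= l -> l <= 1 ->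
  hh (l * a + (1 - l) * b) <= l * hh a + (1 - l) * hh b.
Proof.
move=> l0 l1; rewrite /hh.
apply: (@le_trans _ _ ((l * `|a| + (1 - l) * `|b|) `^ p)).
  rewrite ge0_ler_powR ?nnegrE ?(le_trans _ (ltW p1))//.
    by rewrite addr_ge0// mulr_ge0// subr_ge0.
  rewrite (le_trans (ler_normD _ _))// 2!normrM (ger0_norm l0).
  by rewrite (ger0_norm (eqbRL (subr_ge0 _ _) l1)).
have := convex_powR (ltW p1) (Itv01 l0 l1) (x:=`|a|) (y:=`|b|).
rewrite !convRE /=; apply; rewrite inE /= in_itv /= andbT normr_ge0//.
Qed.
End H.


Section J.
Context {R : realType}.
Variable p : R.
Hypothesis p1 : 1 < p.

Lemma hjensen n (a : R) (v : 'I_n -> R) :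
  hh p ((a + \sum_(j < n) v j) / (n.+1)%:R) <=
  (hh p a + \sum_(j < n) hh p (v j)) / (n.+1)%:R.
Proof.
elim: n v => [|n IH] v.
  by rewrite !big_ord0 !addr0 !divr1.
rewrite !big_ord_recr /=.
set S := \sum_(i < n) v _; set T := \sum_(i < n) hh p (v _).
set w := v ord_max.
have n1 : 0 < (n.+1)%:R :> R by rewrite ltr0n.
have n2 : 0 < (n.+2)%:R :> R by rewrite ltr0n.
have e2 : (n.+2)%:R = (n.+1)%:R + 1 :> R by rewrite natr1.
pose l : R := (n.+1)%:R / (n.+2)%:R.
have l0 : 0 <= l by rewrite divr_ge0// ltW.
have l1 : l <= 1 by rewrite ler_pdivrMr// mul1r ler_nat.
have -> : (a + (S + w)) / (n.+2)%:R = l * ((a + S) / (n.+1)%:R) + (1 - l) * w.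
  rewrite /l e2 in n2 *.
  field; by rewrite ?gt_eqF.
apply: (le_trans (@hconv R p p1 l _ _ l0 l1)).
apply: (@le_trans _ _ (l * ((hh p a + T) / (n.+1)%:R) + (1 - l) * hh p w)).
  by rewrite lerD2r ler_wpM2l// IH.
rewrite /l e2 in n2 *.
rewrite le_eqVlt; apply/orP; left; apply/eqP; field; by rewrite ?gt_eqF.
Qed.
End J.


Section D.
Context {R : realType}.
Variable p : R.
Hypothesis p1 : 1 < p.

Definition dh (t : R) := p * `|t| `^ (p - 1) * Num.sg t.

Lemma hh0 : hh p 0 = 0.
Proof. by rewrite /hh normr0 powR0// gt_eqF// (lt_trans ltr01 p1). Qed.

Lemma hh_derive0 : is_derive (0:R) 1 (hh p) 0.
Proof.
have p10 : 0 < p - 1 by rewrite subr_gt0.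
have H : (fun h : R => h^-1 *: (hh p (h *: 1 + 0) - hh p 0)) @ 0^' --> (0:R).
  apply/cvgrPdist_lt => e e0.
  pose d := e `^ ((p - 1)^-1).
  have d0 : 0 < d by rewrite powR_gt0.
  near=> h.
  have hn0 : h != 0 by near: h; exact: nbhs_dnbhs_neq.
  have hd : `|h| < d by near: h; exact: dnbhs0_lt.
  rewrite hh0 subr0 sub0r normrN /hh addr0 [_%:A]mulr1 normrM normfV norm_powR // normr_id mulrC.
  rewrite -[X in X^-1](powRr1 (normr_ge0 h)) -powRB; last by rewrite normr_eq0 hn0 implybT.
  have -> : e = d `^ (p - 1).
    by rewrite /d -powRrM mulVf ?gt_eqF// powRr1// ltW.
  by apply: gt0_ltr_powR; rewrite // nnegrE ltW.
apply: DeriveDef; first by apply/cvg_ex; exists 0.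
exact: cvg_lim.
Unshelve. all: by end_near. Qed.

Lemma hh_derive (t : R) : is_derive t 1 (hh p) (dh t).
Proof.
have [t0|t0|->] := ltgtP t 0; last by rewrite /dh sgr0 mulr0; exact: hh_derive0.
- have -> : dh t = p * (- t) `^ (p - 1) * (- 1).
    by rewrite /dh ltr0_norm// ltr0_sg.
  apply: (near_eq_is_derive (f := (fun s : R => (- s) `^ p))).
    near=> s; rewrite /hh /= ltr0_norm//; near: s; exact: lt_nbhsl.
  have H1 : is_derive (- t) 1 (@powR R ^~ p) (p * (-t) `^ (p-1)).
    by apply: is_derive1_powR; rewrite oppr_gt0.
  have H2 : is_derive t 1 (-%R : R -> R) (-1) := is_deriveNid _ _.
  exact: (is_derive1_comp H1 H2).
- have -> : dh t = p * t `^ (p - 1).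
    by rewrite /dh gtr0_norm// gtr0_sg// mulr1.
  apply: (@near_eq_is_derive _ _ _ (@powR R ^~ p)).
    near=> s; rewrite /hh /= gtr0_norm//; near: s; exact: lt_nbhsr.
  exact: is_derive1_powR.
Unshelve. all: by end_near. Qed.
End D.


Section C.
Context {R : realType} {m n : nat}.
Variables (p : R) (A : 'M[R]_(m, n)) (y : 'I_m -> R).
Hypothesis p1 : 1 < p.

Lemma hh_cont : continuous (hh p).
Proof.
move=> t; apply: differentiable_continuous; apply/derivable1_diffP.
by have [] := @hh_derive R p p1 t.
Qed.

Lemma cvg_sumr (I : finType) (F : I -> nat -> R) (a : I -> R) :
  (forall i, F i k @[k --> \oo] --> a i) ->
  \sum_(i : I) F i k @[k --> \oo] --> \sum_(i : I) a i.
Proof.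
move=> H; apply: cvg_big => //; first exact: add_continuous.
Qed.

Lemma cvg_coord (u : nat -> 'rV[R]_n) (zs : 'rV[R]_n) j :
  u k @[k --> \oo] --> zs -> u k ord0 j @[k --> \oo] --> zs ord0 j.
Proof.
move=> H; exact: (continuous_cvg _ (@coord_continuous R 1 n ord0 j zs) H).
Qed.

Lemma cvg_rowdot (u : nat -> 'rV[R]_n) (zs : 'rV[R]_n) i :
  u k @[k --> \oo] --> zs -> rowdot A i (u k) @[k --> \oo] --> rowdot A i zs.
Proof.
move=> H; apply: cvg_sumr => j; apply: cvgM; first exact: cvg_cst.
exact: cvg_coord.
Qed.

Lemma cvg_gP (u : nat -> 'rV[R]_n) (w : nat -> R) (zs : 'rV[R]_n) (ws : R) j :
  u k @[k --> \oo] --> zs -> w k @[k --> \oo] --> ws ->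
  gPROMPT p A y (u k) j (w k) @[k --> \oo] --> gPROMPT p A y zs j ws.
Proof.
move=> Hu Hw; rewrite /gPROMPT.
apply: cvg_big => //; first exact: add_continuous.
move=> i _; apply: cvgM; first exact: cvg_cst.
apply: (continuous_cvg _ (hh_cont _)).
apply: cvgB => //; rewrite /sPROMPT; apply: cvgD; first exact: cvg_coord.
apply: cvgM; last exact: cvg_cst.
apply: cvgB; first exact: cvg_cst.
exact: cvg_rowdot.
Qed.
End C.


Section M.
Context {R : realType} {m n : nat}.
Variables (p : R) (A : 'M[R]_(m, n)) (y : 'I_m -> R).
Hypothesis p1 : 1 < p.

Definition NN : R := (n.+1)%:R.
Definition res (x : 'rV[R]_n) i := y i - rowdot A i x.
Definition Gm (xk z : 'rV[R]_n) :=
  \sum_(i < m) (hh p (res xk i) +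
     \sum_(j < n) hh p (NN * A i j * (xk ord0 j - z ord0 j) + res xk i)) / NN.
Definition Km (xk : 'rV[R]_n) :=
  \sum_(i < m) (hh p (res xk i) +
     \sum_(j < n) (if A i j == 0 then hh p (res xk i) else 0)) / NN.
Definition cc : R := NN `^ p / NN.

Lemma NN_gt0 : 0 < NN. Proof. by rewrite /NN ltr0n. Qed.
Lemma NNE : NN = n%:R + 1. Proof. by rewrite /NN natr1. Qed.
Lemma cc_gt0 : 0 < cc. Proof. by rewrite /cc divr_gt0// powR_gt0// NN_gt0. Qed.

Lemma fLR_le_G xk z : fLR p A y z <= Gm xk z.
Proof.
rewrite /fLR /Gm; apply: ler_sum => i _.
have -> : y i - rowdot A i z =
   (res xk i + \sum_(j < n) (NN * A i j * (xk ord0 j - z ord0 j) + res xk i)) / NN.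
  rewrite big_split /= sumr_const card_ord.
  under eq_bigr do rewrite -mulrA.
  rewrite -mulr_sumr.
  under eq_bigr do rewrite mulrBr.
  rewrite sumrB /res /rowdot -mulr_natr.
  have := NN_gt0; rewrite NNE => h.
  field; by rewrite gt_eqF.
exact: (@hjensen R p p1 n (res xk i) (fun j => NN * A i j * (xk ord0 j - z ord0 j) + res xk i)).
Qed.

Lemma G_self xk : Gm xk xk = fLR p A y xk.
Proof.
rewrite /Gm /fLR; apply: eq_bigr => i _.
under eq_bigr do rewrite subrr mulr0 add0r.
rewrite sumr_const card_ord -mulr_natr.
have := NN_gt0; rewrite NNE => h.
rewrite /hh /res; field; by rewrite gt_eqF.
Qed.

Lemma G_split xk z :
  Gm xk z = Km xk + cc * \sum_(j < n) gPROMPT p A y xk j (z ord0 j).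
Proof.
have term i j : hh p (NN * A i j * (xk ord0 j - z ord0 j) + res xk i) =
   (if A i j == 0 then hh p (res xk i) else 0) +
   NN `^ p * (if A i j != 0 then `|A i j| `^ p *
        `|z ord0 j - sPROMPT A y xk i j| `^ p else 0).
  have [->|Aij] := eqVneq (A i j) 0.
    by rewrite /= mulr0 mul0r add0r mulr0 addr0.
  rewrite /= add0r.
  have -> : NN * A i j * (xk ord0 j - z ord0 j) + res xk i =
     - (NN * A i j) * (z ord0 j - sPROMPT A y xk i j).
    rewrite /sPROMPT addn1 -/NN /res.
    have := NN_gt0 => h.
    field; by rewrite Aij gt_eqF.
  rewrite /hh normrM normrN normrM powRM// powRM// (gtr0_norm NN_gt0).
  by rewrite mulrA.
have E i : \sum_(j < n) hh p (NN * A i j * (xk ord0 j - z ord0 j) + res xk i) =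
   \sum_(j < n) (if A i j == 0 then hh p (res xk i) else 0) +
   NN `^ p * \sum_(j < n) (if A i j != 0 then `|A i j| `^ p *
        `|z ord0 j - sPROMPT A y xk i j| `^ p else 0).
  by rewrite mulr_sumr -big_split; apply: eq_bigr => j _; exact: term.
rewrite /Gm /Km /cc.
under eq_bigr => i _ do rewrite E addrA mulrDl.
rewrite big_split /=; congr (_ + _).
under eq_bigr do rewrite mulrAC.
rewrite -mulr_sumr; congr (_ * _).
rewrite exchange_big /=; apply: eq_bigr => j _.
by rewrite /gPROMPT [RHS]big_mkcond.
Qed.

Lemma step (xk xk1 : 'rV[R]_n)
  (Hm : forall j t, gPROMPT p A y xk j (xk1 ord0 j) <= gPROMPT p A y xk j t) :
  (fLR p A y xk1 <= fLR p A y xk) /\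
  (forall j t, cc * (gPROMPT p A y xk j (xk ord0 j) - gPROMPT p A y xk j t)
     <= fLR p A y xk - fLR p A y xk1).
Proof.
have H1 := fLR_le_G xk xk1; rewrite G_split in H1.
have H2 := G_self xk; rewrite G_split in H2.
set S1 := \sum_(j < n) _ in H1; set S0 := \sum_(j < n) _ in H2.
have c0 := cc_gt0.
have key : S0 - S1 = \sum_(j < n) (gPROMPT p A y xk j (xk ord0 j) -
                                    gPROMPT p A y xk j (xk1 ord0 j)).
  by rewrite /S0 /S1 sumrB.
have ge0 j : 0 <= gPROMPT p A y xk j (xk ord0 j) - gPROMPT p A y xk j (xk1 ord0 j).
  by rewrite subr_ge0.
have D : 0 <= S0 - S1 by rewrite key sumr_ge0.
have F : cc * (S0 - S1) <= fLR p A y xk - fLR p A y xk1.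
  rewrite -H2 mulrBr; lra.
split.
  have : 0 <= cc * (S0 - S1) by rewrite mulr_ge0// ltW.
  lra.
move=> j t; apply: le_trans F; apply: ler_wpM2l; first exact: ltW.
rewrite key (bigD1 j)//= -[leLHS]addr0; apply: lerD.
  by rewrite lerB.
by rewrite sumr_ge0.
Qed.
End M.


Lemma cvg_phi (phi : nat -> nat) : (forall k, (phi k < phi k.+1)%N) ->
  phi @ \oo --> \oo.
Proof.
move=> H P [N _ PN]; exists N => // k /= Hk; apply: PN.
have : (k <= phi k)%N.
  elim: k {Hk} => // k IH; exact: leq_ltn_trans IH (H k).
exact: leq_trans.
Qed.

Section E.
Context {R : realType}.

Lemma is_derive_affine {V : normedModType R} (f : V -> R) (x v : V) (c : R) :
  (forall h : R, h != 0 -> f (h *: v + x) - f x = h * c) -> is_derive x v f c.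
Proof.
move=> H.
have Hq : (fun h : R => h^-1 *: ((f \o shift x) (h *: v) - f x)) @ 0^' --> c.
  apply/cvgrPdist_lt => e e0; near=> h.
  have hn0 : h != 0 by near: h; exact: nbhs_dnbhs_neq.
  by rewrite /= H// [_ *: _]mulrA mulVf// mul1r subrr normr0.
apply: DeriveDef; first by apply/cvg_ex; exists c.
exact: cvg_lim.
Unshelve. all: by end_near. Qed.

Lemma derive_line {V : normedModType R} (F : V -> R) (x v : V) (phi : R -> R) (d : R) :
  (forall h : R, F (h *: v + x) = phi h) -> is_derive (0:R) (1:R) phi d ->
  is_derive x v F d.
Proof.
move=> H [Hd HD].
have E : (fun h : R => h^-1 *: ((F \o shift x) (h *: v) - F x)) =
         (fun h : R => h^-1 *: ((phi \o shift 0) (h *: 1) - phi 0)).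
  apply/funext => h /=; rewrite H -(H 0) scale0r add0r addr0.
  by rewrite [_ *: 1]mulr1.
apply: DeriveDef.
  by rewrite /derivable E.
by rewrite /derive /= E.
Qed.

Lemma fermat (g : R -> R) (c D : R) : (forall t, derivable g t 1) ->
  is_derive c 1 g D -> (forall s, g c <= g s) -> D = 0.
Proof.
move=> Hall HD Hm.
have H0 : is_derive c 1 g 0.
  apply: (@derive1_at_min _ g (c - 1) (c + 1) c).
  - by rewrite lerD2l; lra.
  - by move=> t _; exact: Hall.
  - by rewrite in_itv /=; apply/andP; split; lra.
  - by move=> t _; exact: Hm.
by case: HD => _ <-; case: H0.
Qed.
End E.


Section F.
Context {R : realType}.
Variable p : R.
Hypothesis p1 : 1 < p.

Lemma dh_ident (a r N : R) : a != 0 -> 0 < N ->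
  `|a| `^ p * dh p (- (r / (N * a))) = - (N `^ (p - 1))^-1 * (a * dh p r).
Proof.
move=> a0 N0.
have p0 : 0 < p by rewrite (lt_trans ltr01 p1).
have q0 : 0 < p - 1 by rewrite subr_gt0.
have aN : 0 < `|a| by rewrite normr_gt0.
rewrite /dh normrN normrM normfV normrM (gtr0_norm N0).
rewrite powRM ?normr_ge0 ?invr_ge0 ?mulr_ge0 ?ltW//.
rewrite -(powR_inv1 (a:=N * `|a|)); last by rewrite mulr_ge0 ?ltW.
rewrite -powRrM mulN1r powRN powRM ?ltW//.
rewrite sgrN sgrM sgrV sgrM (gtr0_sg N0) mul1r.
rewrite -(mulr_powRB1 (ltW aN) p0).
have : 0 < `|a| `^ (p - 1) by rewrite powR_gt0.
have : 0 < N `^ (p - 1) by rewrite powR_gt0.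
set X := `|a| `^ (p - 1); set Y := N `^ (p - 1).
move=> Y0 X0.
rewrite [in RHS](numEsg a).
field; by rewrite !gt_eqF.
Qed.
End F.


Section G.
Context {R : realType} {m n : nat}.
Variables (p : R) (A : 'M[R]_(m, n)) (y : 'I_m -> R).
Hypothesis p1 : 1 < p.

Lemma rowdot_lin i (h : R) (v x : 'rV[R]_n) :
  rowdot A i (h *: v + x) = h * rowdot A i v + rowdot A i x.
Proof.
rewrite /rowdot mulr_sumr -big_split /=; apply: eq_bigr => j _.
by rewrite !mxE; ring.
Qed.

Lemma gP_derive (xk : 'rV[R]_n) j (t : R) :
  is_derive t 1 (gPROMPT p A y xk j)
    (\sum_(i < m | A i j != 0) `|A i j| `^ p * dh p (t - sPROMPT A y xk i j)).
Proof.
have -> : gPROMPT p A y xk j = \sum_(i < m) (fun s => if A i j != 0 then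
      `|A i j| `^ p * hh p (s - sPROMPT A y xk i j) else 0).
  apply/funext => s; rewrite fct_sumE /gPROMPT big_mkcond /=.
  by apply: eq_bigr => i _; case: ifP.
rewrite [X in is_derive _ _ _ X]big_mkcond /=; apply: is_derive_sum => i.
case: ifP => _; last exact: is_derive_cst.
set s0 := sPROMPT A y xk i j.
have H1 : is_derive ((fun s => s - s0) t) 1 (hh p) (dh p (t - s0)).
  exact: hh_derive.
have H2 : is_derive t 1 (fun s : R => s - s0) 1.
  apply: is_derive_affine => h _; rewrite [_ *: _]mulr1; ring.
have H3 := @is_derive1_comp R (hh p) (fun s => s - s0) t _ _ H1 H2.
rewrite -[X in is_derive _ _ _ X]mulr1.
have H4 := (is_deriveZ (`|A i j| `^ p) H3).
rewrite -mulrA; exact: H4.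
Qed.

Lemma fLR_is_derive (xs v : 'rV[R]_n) :
  is_derive xs v (fLR p A y)
    (\sum_(i < m) dh p (y i - rowdot A i xs) * (- rowdot A i v)).
Proof.
have -> : fLR p A y = \sum_(i < m) (fun x => hh p (y i - rowdot A i x)).
  by apply/funext => x; rewrite fct_sumE.
apply: is_derive_sum => i.
set r := y i - rowdot A i xs; set d := rowdot A i v.
apply: (@derive_line _ _ _ _ _ (hh p \o (fun h : R => r - h * d))).
  move=> h; rewrite /= rowdot_lin /r; congr (hh p _); rewrite /d; ring.
have H1 : is_derive ((fun h : R => r - h * d) 0) 1 (hh p) (dh p r).
  by rewrite mul0r subr0; exact: hh_derive.
have H2 : is_derive (0:R) 1 (fun h : R => r - h * d) (- d).
  apply: is_derive_affine => h _; rewrite [_ *: _]mulr1 addr0 mul0r subr0; ring.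
exact: (@is_derive1_comp R (hh p) (fun h : R => r - h * d) 0 _ _ H1 H2).
Qed.

Lemma fLR_diff (xs : 'rV[R]_n) : differentiable (fLR p A y) xs.
Proof.
have -> : fLR p A y = \sum_(i < m) (hh p \o (fun x => y i - rowdot A i x)).
  by apply/funext => x; rewrite fct_sumE.
apply: differentiable_sum => i; apply: differentiable_comp.
  apply: differentiableB; first exact: differentiable_cst.
  have -> : rowdot A i = \sum_(j < n) (A i j *: (fun x : 'rV[R]_n => x ord0 j)).
    by apply/funext => x; rewrite fct_sumE.
  apply: differentiable_sum => j; apply: differentiableZ.
  exact: differentiable_coord.
apply/derivable1_diffP.
by have [] := @hh_derive R p p1 (y i - rowdot A i xs).
Qed.
End G.


Theorem mainTheorem2 (R : realType) (m n : nat) (p : R)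
  (A : 'M[R]_(m, n)) (y : 'I_m -> R) (x : nat -> 'rV[R]_n) :
  1 < p ->
  (forall j : 'I_n, exists i : 'I_m, A i j != 0) ->
  (forall (k : nat) (j : 'I_n) (t : R),
      gPROMPT p A y (x k) j (x k.+1 ord0 j) <= gPROMPT p A y (x k) j t) ->
  (forall k : nat, fLR p A y (x k.+1) <= fLR p A y (x k)) /\
  (exists l : R, (fun k => fLR p A y (x k)) @ \oo --> l) /\
  (forall xs : 'rV[R]_n,
      (exists phi : nat -> nat, (forall k, (phi k < phi k.+1)%N) /\
          (fun k => x (phi k)) @ \oo --> xs) ->
      differentiable (fLR p A y) xs /\ 'd (fLR p A y) xs = 0 :> ('rV[R]_n -> R)).
Proof.
move=> p1 Hcol Hmin.
have St k := @step R m n p A y p1 (x k) (x k.+1) (Hmin k).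
have mono : forall k, fLR p A y (x k.+1) <= fLR p A y (x k) by move=> k; case: (St k).
set u := fun k => fLR p A y (x k).
have Lcv : u @ \oo --> inf (u @` setT).
  apply: nonincreasing_cvgn; first by apply/nonincreasing_seqP => k; exact: mono.
  exists 0 => _ [k _ <-]; rewrite /u /fLR sumr_ge0// => i _; exact: powR_ge0.
set l := inf (u @` setT) in Lcv.
split => //; split; first by exists l.
move=> xs [phi [Hphi Hxs]].
have C1 : (fun k => u (phi k)) @ \oo --> l := cvg_comp _ _ (cvg_phi _ Hphi) Lcv.
have Hphi' : forall k, ((phi k).+1 < (phi k.+1).+1)%N by move=> k; rewrite ltnS.
have C2 : (fun k => u (phi k).+1) @ \oo --> l := cvg_comp _ _ (cvg_phi _ Hphi') Lcv.
have Hmin_xs : forall j t, gPROMPT p A y xs j (xs ord0 j) <= gPROMPT p A y xs j t.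
  move=> j t.
  have U1 := @cvg_gP R m n p A y p1 (fun k => x (phi k)) (fun k => x (phi k) ord0 j)
     xs (xs ord0 j) j Hxs (cvg_coord (fun k => x (phi k)) xs j Hxs).
  have U2 : (fun k => gPROMPT p A y (x (phi k)) j t) @ \oo --> gPROMPT p A y xs j t.
    exact: (@cvg_gP R m n p A y p1 (fun k => x (phi k)) (fun k => t)
     xs t j Hxs (cvg_cst t)).
  have W : (fun k => u (phi k) - u (phi k).+1) @ \oo --> l - l by apply: cvgB.
  have Uc : @cc R n p * (gPROMPT p A y (x (phi k)) j (x (phi k) ord0 j) -
      gPROMPT p A y (x (phi k)) j t) @[k --> \oo] -->
      @cc R n p * (gPROMPT p A y xs j (xs ord0 j) - gPROMPT p A y xs j t).
    apply: cvgMl_tmp; exact: cvgB U1 U2.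
  have Hle : \forall k \near \oo, @cc R n p * (gPROMPT p A y (x (phi k)) j (x (phi k) ord0 j) -
      gPROMPT p A y (x (phi k)) j t) <= u (phi k) - u (phi k).+1.
    by apply: nearW => k; exact: (St (phi k)).2 j t.
  have := ler_cvg_to Uc W Hle.
  rewrite subrr pmulr_rle0 ?subr_le0//; last exact: cc_gt0.
  by apply; exact: _.
have D0 : forall j, \sum_(i < m) A i j * dh p (y i - rowdot A i xs) = 0.
  move=> j.
  have Hall : forall t, derivable (gPROMPT p A y xs j) t 1.
    by move=> t; case: (@gP_derive R m n p A y p1 xs j t).
  have := fermat _ _ _ Hall (@gP_derive R m n p A y p1 xs j (xs ord0 j)) (Hmin_xs j).
  have N0 : 0 < (n + 1)%:R :> R by rewrite ltr0n addn1.
  have T i : A i j != 0 -> `|A i j| `^ p * dh p (xs ord0 j - sPROMPT A y xs i j) =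
      - ((n + 1)%:R `^ (p - 1))^-1 * (A i j * dh p (y i - rowdot A i xs)).
    move=> Aij.
    have -> : xs ord0 j - sPROMPT A y xs i j =
       - ((y i - rowdot A i xs) / ((n + 1)%:R * A i j)).
      by rewrite /sPROMPT; ring.
    exact: dh_ident.
  rewrite (eq_bigr _ T) -mulr_sumr => /eqP.
  rewrite mulf_eq0 oppr_eq0 invr_eq0 gt_eqF ?powR_gt0//= => /eqP H.
  rewrite (bigID (fun i => A i j != 0)) /= H add0r big1 // => i /negPn/eqP ->.
  by rewrite mul0r.
split; first exact: (@fLR_diff R m n p A y p1 xs).
apply/funext => v /=.
rewrite -deriveE; last exact: (@fLR_diff R m n p A y p1 xs).
have [_ ->] := @fLR_is_derive R m n p A y p1 xs v.
rewrite /rowdot.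
under eq_bigr do rewrite mulrN mulr_sumr.
rewrite sumrN exchange_big /= big1 ?oppr0 // => j _.
rewrite -[RHS](mulr0 (v ord0 j)) -[in RHS](D0 j) /rowdot mulr_sumr; apply: eq_bigr => i _.
ring.
Qed.
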